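(* Let $K\ge2$, $p\in(0,1)$, $M>0$, and let $f\in\mathcal M_p$ with $\sigma_f$ equal to the identity (so item $1$ is top-ranked). Then the output of \textsc{NE} with parameter $M$ satisfies $$\mathbb P(i_{\mathrm{out}}\neq 1)\le (2^{K-1}-1)\,p^M.$$
   Context: Items are $[K]=\{1,\dots,K\}$, and $\mathcal S=\{S\subseteq[K]:|S|\ge 2\}$. A preference $f$ is a family of numbers $f(i\mid S)$, $S\in\mathcal S$, $i\in[K]$. For $p\in(0,1)$, the $p$-Separable family $\mathcal M_p$ consists of all $f$ such that (i) $f(i\mid S)>0$ iff $i\in S$; (ii) $\sum_{i\in S}f(i\mid S)=1$ for all $S\in\mathcal S$; (iii) there is a bijection $\sigma_f:[K]\to[K]$ (the ranking; $\sigma_f(i)=k$ means item $i$ is in $k$-th highest position) such that for all $S\in\mathcal S$ and $i,i'\in S$ with $\sigma_f(i')<\sigma_f(i)$, $f(i\mid S)\le p\, f(i'\mid S)$. Interaction model: at each time $t=1,2,\dots$ a display set $S_t\in\mathcal S$ is chosen based on the past, and a choice $X_t\in S_t$ is observed, which conditionally on the past and $S_t$ has distribution $f(\cdot\mid S_t)$. Algorithm \textsc{NE} (Nested Elimination) with parameter $M>0$: set $W_0(i)=0$ for all $i\in[K]$, $S_{\mathrm{active}}=[K]$, $t=0$. While $|S_{\mathrm{active}}|>1$: set $t\leftarrow t+1$; display $S_{\mathrm{active}}$ and observe $X_t$; set $W_t(X_t)=W_{t-1}(X_t)+1$ and $W_t(i)=W_{t-1}(i)$ for $i\ne X_t$;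 let $\pi_t:[|S_{\mathrm{active}}|]\to S_{\mathrm{active}}$ be a bijection with $W_t(\pi_t(1))\ge W_t(\pi_t(2))\ge\cdots$ (ties broken arbitrarily); find the smallest $k\in\{1,\dots,|S_{\mathrm{active}}|-1\}$ with $\sum_{i=1}^kW_t(\pi_t(i))-k\,W_t(\pi_t(k+1))\ge M$, and if it exists set $S_{\mathrm{active}}\leftarrow\{\pi_t(1),\dots,\pi_t(k)\}$. The stopping time $\tau$ is the final value of $t$ and $i_{\mathrm{out}}$ is the unique element of the final $S_{\mathrm{active}}$. *)

(* Defs.v *)
From HB Require Import structures.
From mathcomp Require Import all_boot all_order all_algebra.
From mathcomp Require Import reals exp.
Set Implicit Arguments. Unset Strict Implicit. Unset Printing Implicit Defensive.
Import Order.TTheory GRing.Theory Num.Theory.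
Local Open Scope ring_scope.

(* Items are 'I_K (item i of the paper is the ordinal with value i-1).
   A preference is f : 'I_K -> {set 'I_K} -> R, with f i S = f(i | S);
   only the values for #|S| >= 2 matter. *)

(* f is in the p-Separable family with ranking sigma (sigma i = position of
   item i, 0-indexed, so sigma i' < sigma i means i' ranks higher). *)
Definition pSeparable_with {R : realType} {K : nat} (p : R)
    (f : 'I_K -> {set 'I_K} -> R) (sigma : 'I_K -> 'I_K) : Prop :=
  bijective sigma /\
  forall S : {set 'I_K}, (2 <= #|S|)%N ->
    [/\ (forall i, 0 < f i S <-> i \in S),
        \sum_(i in S) f i S = 1 &
        (forall i i', i \in S -> i' \in S -> (sigma i' < sigma i)%N ->
                      f i S <= p * f i' S)].

Definition pSeparable {R : realType} {K : nat} (p : R)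
    (f : 'I_K -> {set 'I_K} -> R) : Prop :=
  exists sigma, pSeparable_with p f sigma.

Definition incrW {K : nat} (W : {ffun 'I_K -> nat}) (x : 'I_K) : {ffun 'I_K -> nat} :=
  [ffun i => (W i + (i == x))%N].

(* pi_t : the active items sorted by decreasing W (a fixed tie-breaking). *)
Definition ne_order {K : nat} (W : {ffun 'I_K -> nat}) (A : {set 'I_K}) : seq 'I_K :=
  sort (fun i j => W j <= W i)%N (enum A).

Definition ne_crit {R : realType} {K : nat} (W : {ffun 'I_K -> nat})
    (A : {set 'I_K}) (k : nat) : R :=
  let ws := map W (ne_order W A) in
  (sumn (take k ws))%:R - (k * nth 0%N ws k)%:R.

Definition ne_next {R : realType} {K : nat} (M : R) (W : {ffun 'I_K -> nat})
    (A : {set 'I_K}) : {set 'I_K} :=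
  match [seq k <- iota 1 (#|A| - 1) | M <= ne_crit W A k] with
  | k :: _ => [set i | i \in take k (ne_order W A)]
  | [::] => A
  end.

(* Probability, starting from state (W, A), that NE stops within T further
   rounds and outputs an item different from item 1 (the ordinal of value 0). *)
Fixpoint ne_err {R : realType} {K : nat} (f : 'I_K -> {set 'I_K} -> R) (M : R)
    (T : nat) (W : {ffun 'I_K -> nat}) (A : {set 'I_K}) {struct T} : R :=
  if (#|A| <= 1)%N then (if [exists i in A, val i != 0%N] then 1 else 0)
  else match T with
       | 0 => 0
       | T'.+1 => \sum_(x in A)
                    f x A * ne_err f M T' (incrW W x) (ne_next M (incrW W x) A)
       end.

(* P(tau <= T and i_out <> 1) for NE run from W_0 = 0, S_active = [K]. *)
Definition ne_err_by {R : realType} {K : nat} (f : 'I_K -> {set 'I_K} -> R)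
    (M : R) (T : nat) : R :=
  ne_err f M T [ffun => 0%N] [set: 'I_K].

(* Main.v *)
Require Import Defs.
From HB Require Import structures.
From mathcomp Require Import all_boot all_order all_algebra.
From mathcomp Require Import reals exp.
From mathcomp Require Import ring lra.
Import Order.TTheory GRing.Theory Num.Theory.
Local Open Scope ring_scope.

Fixpoint sq {R : realType} (p : R) (n : nat) : R :=
  match n with 0%N => 0 | n.+1 => p * (1 + sq p n) end.

Lemma sq_ge0 {R : realType} (p : R) n : 0 <= p -> 0 <= sq p n.
Proof. move=> p0; elim: n => [|n IH] //=; apply: mulr_ge0 => //; exact: addr_ge0. Qed.

Lemma sq_eq {R : realType} (p : R) n : sq p n * (1 - p) = p * (1 - p ^+ n).
Proof. elim: n => [|n IH] /=; first by rewrite mul0r expr0 subrr mulr0.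
rewrite -mulrA (mulrDl 1) mul1r IH exprS; ring. Qed.

Lemma chain {R : realType} {K : nat} (p : R) (f : 'I_K -> {set 'I_K} -> R) (A : {set 'I_K}) :
  0 < p ->
  (forall i, i \in A -> 0 <= f i A) ->
  (forall i i', i \in A -> i' \in A -> (i' < i)%N -> f i A <= p * f i' A) ->
  forall n c (B : {set 'I_K}), B \subset A -> #|B| = n -> c \in A -> (forall b, b \in B -> (c < b)%N) ->
  \sum_(b in B) f b A <= f c A * sq p n.
Proof.
move=> p0 fge0 ford; elim=> [|n IH] c B sBA cB cA Bc.
  by move/eqP: cB; rewrite cards_eq0 => /eqP ->; rewrite big_set0 /= mulr0.
have [b0 b0B]: exists b0, b0 \in B.
  by apply/set0Pn; rewrite -card_gt0 cB.
case: (arg_minnP (fun i : 'I_K => val i) b0B) => b bB' bmin.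
have bB : b \in B := bB'.
rewrite (bigD1 b) //=.
have bA : b \in A by apply: (subsetP sBA).
have IH' := IH b (B :\ b).
have h1 : \sum_(i in B | i != b) f i A <= f b A * sq p n.
  rewrite (eq_bigl (fun i => i \in B :\ b)); last first.
    by move=> i; rewrite in_setD1 andbC.
  apply: IH' => //.
  - by apply: subset_trans sBA; apply: subD1set.
  - by move: cB; rewrite (cardsD1 b B) bB add1n => -[].
  move=> i; rewrite in_setD1 => /andP [ib iB].
  rewrite ltn_neqAle bmin // andbT; apply/eqP => e; move/eqP: ib; apply.
  by apply: val_inj.
have h2 : f b A <= p * f c A by apply: ford => //; apply: Bc.
apply: (le_trans (lerD (lexx _) h1)).
rewrite -{1}(mulr1 (f b A)) -mulrDr /=.
rewrite mulrA; apply: ler_wpM2r; last by rewrite mulrC.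
by apply: addr_ge0 => //; apply: sq_ge0; apply: ltW.
Qed.

Definition term {R : realType} {K : nat} (p M : R) (o : 'I_K)
  (W : {ffun 'I_K -> nat}) (B : {set 'I_K}) : R :=
  p `^ M * (p ^+ (#|B| * W o) / p ^+ (\sum_(i in B) W i)).

Lemma sum_ind {K : nat} (B : {set 'I_K}) x :
  (\sum_(i in B) (i == x : nat) = (x \in B))%N.
Proof.
case: (boolP (x \in B)) => xB.
  rewrite (bigD1 x) //= eqxx big1 // => i /andP [_ /negbTE ->] //.
rewrite big1 // => i iB; case: eqP => // e; move: xB; rewrite -e iB.
done.
Qed.

Lemma term_incr {R : realType} {K : nat} (p M : R) (o : 'I_K) W B x :
  p != 0 ->
  term p M o (incrW W x) B =
  term p M o W B * (p ^+ (#|B| * (o == x)) / p ^+ (x \in B)).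
Proof.
move=> p0; rewrite /term /incrW ffunE.
have -> : (\sum_(i in B) [ffun i => (W i + (i == x))%N] i =
           \sum_(i in B) W i + (x \in B))%N.
  by rewrite -sum_ind -big_split /=; apply: eq_bigr => i _; rewrite ffunE.
rewrite mulnDr !exprD.
have h1 : p ^+ (\sum_(i in B) W i) != 0 by rewrite expf_neq0.
have h2 : p ^+ (x \in B) != 0 by rewrite expf_neq0.
rewrite invfM; field.
by rewrite h1 h2.
Qed.

Lemma super_c {R : realType} {K : nat} (p : R) (f : 'I_K -> {set 'I_K} -> R)
  (A B : {set 'I_K}) (o : 'I_K) :
  0 < p -> p < 1 -> val o = 0%N ->
  (forall i, i \in A -> 0 <= f i A) ->
  \sum_(i in A) f i A = 1 ->
  (forall i i', i \in A -> i' \in A -> (i' < i)%N -> f i A <= p * f i' A) ->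
  o \in A -> B \subset A :\ o ->
  \sum_(x in A) f x A * (p ^+ (#|B| * (o == x)) / p ^+ (x \in B)) <= 1.
Proof.
move=> p0 p1 o0 fpos fsum ford oA sB.
have oB : o \notin B by apply/negP => /(subsetP sB); rewrite in_setD1 eqxx.
have BA : B \subset A by apply: subset_trans sB (subD1set _ _).
pose q := p ^+ #|B|.
have pn0 : p != 0 by rewrite gt_eqF.
have e : forall x, x \in A -> f x A * (p ^+ (#|B| * (o == x)) / p ^+ (x \in B)) =
   f x A + (x == o)%:R * (f x A * (q - 1)) + (x \in B)%:R * (f x A * (p^-1 - 1)).
  move=> x xA; case: (eqVneq x o) => [->|xo].
    by rewrite (negbTE oB) muln1 expr0 divr1 /= mul1r mul0r addr0 /q; ring.
  rewrite muln0 expr0 mul0r addr0.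
  case: (x \in B) => /=; rewrite ?expr1 ?mul1r ?mul0r ?addr0 ?div1r ?divr1 ?mulr1 //.
  by ring.
rewrite (eq_bigr _ e) !big_split /= fsum.
have e1 : \sum_(i in A) (i == o)%:R * (f i A * (q - 1)) = f o A * (q - 1).
  rewrite (bigD1 o) //= eqxx mul1r big1 ?addr0 // => i /andP [_ /negbTE ->].
  by rewrite mul0r.
have e2 : \sum_(i in A) (i \in B)%:R * (f i A * (p^-1 - 1)) =
          (\sum_(i in B) f i A) * (p^-1 - 1).
  rewrite mulr_suml (big_setID B) /= (setIidPr BA).
  rewrite [X in _ + X]big1 ?addr0; last first.
    by move=> i; rewrite in_setD => /andP [/negbTE -> _]; rewrite mul0r.
  by apply: eq_bigr => i ->; rewrite mul1r.
rewrite e1 e2.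
have hc : \sum_(b in B) f b A <= f o A * sq p #|B|.
  apply: (chain p f A p0 fpos ford _ _ _ BA (erefl _) oA) => // b bB.
  have : b \in A :\ o by apply: (subsetP sB).
  rewrite in_setD1 o0 lt0n => /andP [bo _]; apply: contraNneq bo => eb.
  by apply/eqP; apply: val_inj; rewrite /= eb o0.
have hs := sq_eq p #|B|.
have foge : 0 <= f o A by apply: fpos.
have h3 : (\sum_(b in B) f b A) * (p^-1 - 1) <= f o A * sq p #|B| * (p^-1 - 1).
  apply: ler_wpM2r => //.
  by rewrite subr_ge0 invf_ge1 //; exact: ltW.
have h4 : f o A * sq p #|B| * (p^-1 - 1) = f o A * (1 - q).
  have -> : p^-1 - 1 = (1 - p) / p by field.
  by rewrite mulrA -(mulrA (f o A)) hs /q; field.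
rewrite h4 in h3; apply: (le_trans (lerD (lexx _) h3)).
rewrite -addrA -mulrDr.
by rewrite addrA subrK subrr mulr0 addr0.
Qed.

Lemma ne_next_sub {R : realType} {K : nat} (M : R) W (A : {set 'I_K}) :
  ne_next M W A \subset A.
Proof.
rewrite /ne_next; case: [seq _ <- _ | _] => [|k ks] //.
apply/subsetP => i; rewrite inE => /mem_take.
by rewrite /ne_order mem_sort mem_enum.
Qed.

Lemma ne_next_trig {R : realType} {K : nat} (p M : R) (o : 'I_K) W (A : {set 'I_K}) :
  0 < p -> p < 1 -> 0 < M -> o \in A -> o \notin ne_next M W A ->
  [/\ ne_next M W A \subset A :\ o, ne_next M W A != set0 &
      1 <= term p M o W (ne_next M W A)].
Proof.
move=> p0 p1 M0 oA.
rewrite /ne_next; case E: [seq _ <- _ | _] => [|k kk]; first by rewrite oA.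
move=> onB.
have : k \in [seq k <- iota 1 (#|A| - 1) | M <= ne_crit W A k] by rewrite E mem_head.
rewrite mem_filter mem_iota => /andP [hM /andP [k1 k2]].
set s := ne_order W A.
have ss : size s = #|A| by rewrite /s /ne_order size_sort cardE.
have us : uniq s by rewrite /s /ne_order sort_uniq enum_uniq.
have ms : forall i, (i \in s) = (i \in A) by move=> i; rewrite /s /ne_order mem_sort mem_enum.
have ks : (k < size s)%N.
  rewrite ss; apply: (leq_trans k2); rewrite add1n subn1 prednK //.
  by rewrite card_gt0; apply/set0Pn; exists o.
set B := [set i | i \in take k s].
have cB : #|B| = k.
  rewrite /B cardsE; move/card_uniqP: (take_uniq k us) => ->.
  by rewrite size_takel // ltnW.
split.
- apply/subsetP => i; rewrite inE => iB; rewrite in_setD1 -ms (mem_take iB) andbT.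
  by apply: contraNneq onB => <-; rewrite inE.
- by rewrite -card_gt0 cB.
have sumB : (\sum_(i in B) W i = sumn (take k (map W s)))%N.
  rewrite -map_take sumnE big_map (big_uniq _ (take_uniq k us)).
  by apply: eq_bigl => i; rewrite /B inE.
have Wo : (W o <= nth 0%N (map W s) k)%N.
  have os : o \in s by rewrite ms.
  have jk : (k <= index o s)%N.
    rewrite leqNgt; apply/negP => jk; move: onB; rewrite inE.
    by rewrite -{1}(nth_index o os) -(nth_take o jk) mem_nth // size_takel // ltnW.
  rewrite (nth_map o) //.
  have srt : sorted (fun i j => W j <= W i)%N s.
    by apply: sort_sorted => i j; exact: leq_total.
  have := sorted_leq_nth _ _ o srt.
  move=> /(_ _ _) /(_ k (index o s)); rewrite nth_index //.
  apply => //; rewrite ?inE ?index_mem //.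
  by move=> x y z h1 h2; apply: leq_trans h2 h1.
set S := (\sum_(i in B) W i)%N.
set w := nth 0%N (map W s) k.
have hkw : (k * w <= S)%N.
  have : 0 < (S%:R - (k * w)%:R :> R) by apply: (lt_le_trans M0); move: hM; rewrite /ne_crit -sumB.
  by rewrite subr_gt0 ltr_nat => /ltnW.
have hkW : (k * W o <= S)%N by apply: leq_trans hkw; rewrite leq_mul2l Wo orbT.
set n := (S - k * W o)%N.
have Mn : M <= n%:R.
  apply: (le_trans hM); rewrite /ne_crit -sumB -/S -/w -natrB // ler_nat.
  by apply: leq_sub2l; rewrite leq_mul2l Wo orbT.
have pn : 0 < p ^+ n by rewrite exprn_gt0.
rewrite /term cB -/S -(subnKC hkW) -/n exprD invfM.
have pk : p ^+ (k * W o) != 0 by rewrite expf_neq0 // gt_eqF.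
have -> : p ^+ (k * W o) * ((p ^+ (k * W o))^-1 / p ^+ n) = (p ^+ n)^-1.
  by rewrite mulrA mulfV // mul1r.
rewrite -[_ * _^-1]/(_ / _).
rewrite ler_pdivlMr // mul1r -powR_mulrn; last exact: ltW.
apply: ger_powR => //; rewrite p0; exact: ltW.
Qed.

Definition G {R : realType} {K : nat} (p M : R) (o : 'I_K)
  (W : {ffun 'I_K -> nat}) (A : {set 'I_K}) : R :=
  \sum_(B : {set 'I_K} | (B \subset A :\ o) && (B != set0)) term p M o W B.

Lemma term_ge0 {R : realType} {K : nat} (p M : R) (o : 'I_K) W B :
  0 < p -> 0 <= term p M o W B.
Proof.
move=> p0; rewrite /term; apply: mulr_ge0; first exact: powR_ge0.
by apply: divr_ge0; apply: exprn_ge0; apply: ltW.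
Qed.

Lemma G_mono {R : realType} {K : nat} (p M : R) (o : 'I_K) W (A A' : {set 'I_K}) :
  0 < p -> A' \subset A -> G p M o W A' <= G p M o W A.
Proof.
move=> p0 sA; rewrite /G [X in X <= _]big_mkcond [X in _ <= X]big_mkcond /=.
apply: ler_sum => B _.
case h1: (B \subset A' :\ o) => /=.
  by rewrite (subset_trans h1 (setSD _ sA)) /=.
by case: ifP => _ //; apply: term_ge0.
Qed.

Lemma term_le_G {R : realType} {K : nat} (p M : R) (o : 'I_K) W (A B : {set 'I_K}) :
  0 < p -> B \subset A :\ o -> B != set0 -> term p M o W B <= G p M o W A.
Proof.
move=> p0 sB nB; rewrite /G (bigD1 B) /=; last by rewrite sB nB.
rewrite lerDl; apply: sumr_ge0 => C _; exact: term_ge0.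
Qed.

Lemma G_ge0 {R : realType} {K : nat} (p M : R) (o : 'I_K) W (A : {set 'I_K}) :
  0 < p -> 0 <= G p M o W A.
Proof. by move=> p0; apply: sumr_ge0 => C _; exact: term_ge0. Qed.

Lemma ne_err_S {R : realType} {K : nat} (f : 'I_K -> {set 'I_K} -> R) M T W A :
  ne_err f M T.+1 W A =
  if (#|A| <= 1)%N then (if [exists i in A, val i != 0%N] then 1 else 0)
  else \sum_(x in A) f x A * ne_err f M T (incrW W x) (ne_next M (incrW W x) A).
Proof. by []. Qed.

Lemma ne_err_0 {R : realType} {K : nat} (f : 'I_K -> {set 'I_K} -> R) M W A :
  ne_err f M 0 W A =
  if (#|A| <= 1)%N then (if [exists i in A, val i != 0%N] then 1 else 0) else 0.
Proof. by []. Qed.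

Lemma err_le1 {R : realType} {K : nat} (f : 'I_K -> {set 'I_K} -> R) M :
  (forall S : {set 'I_K}, (2 <= #|S|)%N ->
     (forall i, i \in S -> 0 <= f i S) /\ \sum_(i in S) f i S = 1) ->
  forall T W A, ne_err f M T W A <= 1.
Proof.
move=> H; elim=> [|T IH] W A.
  by rewrite ne_err_0; case: ifP => _ //; case: ifP.
rewrite ne_err_S; case: ifP => [_|]; first by case: ifP.
move/negbT; rewrite -ltnNge => A2; have [fp fs] := H A A2.
rewrite -fs; apply: ler_sum => x xA; rewrite -{2}(mulr1 (f x A)).
by apply: ler_wpM2l; [apply: fp|apply: IH].
Qed.

Lemma main_ind {R : realType} {K : nat} (p M : R) (f : 'I_K -> {set 'I_K} -> R) (o : 'I_K) :
  0 < p -> p < 1 -> 0 < M -> val o = 0%N ->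
  pSeparable_with p f id ->
  forall T W (A : {set 'I_K}), o \in A -> ne_err f M T W A <= G p M o W A.
Proof.
move=> p0 p1 M0 o0 [_ H].
have H1 : forall S : {set 'I_K}, (2 <= #|S|)%N ->
     (forall i, i \in S -> 0 <= f i S) /\ \sum_(i in S) f i S = 1.
  move=> S S2; have [hp hs _] := H S S2; split => // i iS; apply: ltW.
  by apply/hp.
have small : forall A : {set 'I_K}, o \in A -> (#|A| <= 1)%N ->
    [exists i in A, val i != 0%N] = false.
  move=> A oA A1; apply/negbTE/existsP => -[i /andP [iA iv]].
  have io : i != o by apply: contraNneq iv => ->; rewrite o0.
  have : (#|[set i; o]| <= #|A|)%N.
    apply: subset_leq_card; apply/subsetP => j; rewrite !inE.
    by case/orP => /eqP ->.
  by rewrite cards2 io => /leq_trans /(_ A1).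
elim=> [|T IH] W A oA.
  by rewrite ne_err_0; case: ifP => [A1|_]; [rewrite (small A oA A1)|]; apply: G_ge0.
rewrite ne_err_S; case: ifP => [A1|]; first by rewrite (small A oA A1); apply: G_ge0.
move/negbT; rewrite -ltnNge => A2.
have [hp hs ho] := H A A2.
have fp : forall i, i \in A -> 0 <= f i A by move=> i iA; apply: ltW; apply/hp.
apply: (@le_trans _ _ (\sum_(x in A) f x A * G p M o (incrW W x) A)).
  apply: ler_sum => x xA; apply: ler_wpM2l; first exact: fp.
  set W' := incrW W x.
  case: (boolP (o \in ne_next M W' A)) => oA'.
    apply: (le_trans (IH _ _ oA')); apply: G_mono => //; exact: ne_next_sub.
  have [s1 s2 s3] := ne_next_trig p M o W' A p0 p1 M0 oA oA'.
  apply: (le_trans (err_le1 f M H1 _ _ _)).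
  apply: (le_trans s3); exact: term_le_G.
rewrite /G; under eq_bigr do rewrite mulr_sumr.
rewrite exchange_big /=; apply: ler_sum => B /andP [sB _].
under eq_bigr => x _ do rewrite (term_incr p M o W B x (lt0r_neq0 p0)) mulrCA.
rewrite -mulr_sumr; apply: ler_piMr; first exact: term_ge0.
apply: super_c => //.
Qed.

Lemma count_sub {K : nat} (S : {set 'I_K}) :
  #|[pred B : {set 'I_K} | (B \subset S) && (B != set0)]| = (2 ^ #|S| - 1)%N.
Proof.
have h1 := cardD1 set0 (powerset S).
have h3 := card_powerset S.
rewrite powersetE sub0set add1n in h1.
have h2 : #|[pred B : {set 'I_K} | (B \subset S) && (B != set0)]| =
          #|[predD1 powerset S & set0]|.
  by apply: eq_card => B; rewrite !inE andbC.
apply: (eq_trans h2).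
rewrite -h3 h1 subn1 /=.
by [].
Qed.

Theorem mainTheorem3 (R : realType) (K : nat) (p M : R)
    (f : 'I_K -> {set 'I_K} -> R) :
  (2 <= K)%N -> 0 < p -> p < 1 -> 0 < M ->
  pSeparable_with p f id ->
  forall T : nat,
    ne_err_by f M T <= (2 ^ K.-1 - 1)%:R * (p `^ M).
Proof.
move=> K2 p0 p1 M0 hf T.
have K0 : (0 < K)%N by apply: leq_trans K2.
pose o : 'I_K := Ordinal K0.
have := main_ind p M f o p0 p1 M0 (erefl : val o = 0%N) hf T ([ffun => 0%N] : {ffun 'I_K -> nat}) [set: 'I_K] (in_setT o).
rewrite /ne_err_by => h; apply: (le_trans h) => {h}.
rewrite /G.
have -> : \sum_(B : {set 'I_K} | (B \subset [set: 'I_K] :\ o) && (B != set0))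
            term p M o [ffun => 0%N] B =
          \sum_(B : {set 'I_K} | (B \subset [set: 'I_K] :\ o) && (B != set0)) p `^ M.
  apply: eq_bigr => B _; rewrite /term ffunE muln0 expr0.
  rewrite (eq_bigr (fun _ => 0%N)) ?big1 ?expr0 ?divr1 ?mulr1 // => i _; by rewrite ffunE.
rewrite (eq_bigl (fun B => B \in [pred B : {set 'I_K} | (B \subset [set: 'I_K] :\ o) && (B != set0)])) //.
rewrite sumr_const count_sub.
have -> : #|[set: 'I_K] :\ o| = K.-1 by rewrite setTD cardsC1 card_ord.
by rewrite mulr_natl.
Qed.
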